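(* Let $\mathfrak F=(X,\parallel,Y,S_\vee)$ be a frame satisfying (F0)–(F4). Then for every family $(A_j)_{j\in J}$ of stable sets, $\big(\bigvee_{j\in J}A_j\big)^*=\bigcap_{j\in J}A_j^*$. Consequently $(\mathcal G(X),\subseteq,\bigcap,\bigvee,\emptyset,X,(\cdot)^* )$ is a complete lattice with a minimal quasi-complementation operator (an antitone operation satisfying $\emptyset^*=X$ and $(A\vee C)^*=A^*\cap C^*$).
   Context: Polarity $(X,\parallel,Y)$, ${\parallel}\subseteq X\times Y$, $I$ its complement. $U'=\{y:\forall x\in U\;x\parallel y\}$ for $U\subseteq X$, $V'=\{x:\forall y\in V\;x\parallel y\}$ for $V\subseteq Y$; stable sets $A=A''\subseteq X$ form the complete lattice $\mathcal G(X)$ (meets = intersections, joins $\bigvee_jA_j=(\bigcup_jA_j)''$); co-stable sets $B=B''\subseteq Y$ form $\mathcal G(Y)$. $x\preceq z$ iff $\{x\}'\subseteq\{z\}'$, similarly on $Y$; separated means these are partial orders; $\Gamma u$ is the up-set of $u$; closed elements are the sets $\Gamma u$. Frame $(X,\parallel,Y,S_\vee)$ with $S_\vee\subseteq Y\times X$; $S_\vee x=\{y:yS_\vee x\}$, $yS_\vee=\{x:yS_\vee x\}$; $zS'_\vee x$ iff $\forall y(yS_\vee x\Rightarrow z\parallel y)$. Axioms: (F0) $\forall x\exists y\,xIy$ and $\forall y\exists x\,xIy$; (F1) separated; (F2) each $S_\vee x$ is a closed element of $\mathcal G(Y)$; (F3) each $yS_\vee$ is a down-set; (F4) for each $x$,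 $\{z:zS'_\vee x\}\in\mathcal G(X)$ and for each $z$, $\{x:zS'_\vee x\}\in\mathcal G(X)$. $x\perp z$ iff $xS'_\vee z$; $A^*=\{x:\forall z\in A\;x\perp z\}$. *)

(* Defs.v *)
Definition primeX {X Y : Type} (par : X -> Y -> Prop) (U : X -> Prop) : Y -> Prop :=
  fun y => forall x, U x -> par x y.
Definition primeY {X Y : Type} (par : X -> Y -> Prop) (V : Y -> Prop) : X -> Prop :=
  fun x => forall y, V y -> par x y.

Definition set_eq {T : Type} (A B : T -> Prop) : Prop := forall t, A t <-> B t.
Definition subset {T : Type} (A B : T -> Prop) : Prop := forall t, A t -> B t.

Definition stableX {X Y : Type} (par : X -> Y -> Prop) (A : X -> Prop) : Prop :=
  set_eq A (primeY par (primeX par A)).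
Definition costableY {X Y : Type} (par : X -> Y -> Prop) (B : Y -> Prop) : Prop :=
  set_eq B (primeX par (primeY par B)).

Definition leX {X Y : Type} (par : X -> Y -> Prop) (x z : X) : Prop :=
  forall y, par x y -> par z y.
Definition leY {X Y : Type} (par : X -> Y -> Prop) (y w : Y) : Prop :=
  forall x, par x y -> par x w.

Definition Sprime {X Y : Type} (par : X -> Y -> Prop) (S : Y -> X -> Prop) (z x : X) : Prop :=
  forall y, S y x -> par z y.

Definition F0 {X Y : Type} (par : X -> Y -> Prop) : Prop :=
  (forall x, exists y, ~ par x y) /\ (forall y, exists x, ~ par x y).
Definition F1 {X Y : Type} (par : X -> Y -> Prop) : Prop :=
  (forall x z, leX par x z -> leX par z x -> x = z) /\
  (forall y w, leY par y w -> leY par w y -> y = w).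
(* each S_∨ x is a closed element Γ y of G(Y) *)
Definition F2 {X Y : Type} (par : X -> Y -> Prop) (S : Y -> X -> Prop) : Prop :=
  forall x, costableY par (fun y => S y x) /\
            exists y0, set_eq (fun y => S y x) (fun y => leY par y0 y).
Definition F3 {X Y : Type} (par : X -> Y -> Prop) (S : Y -> X -> Prop) : Prop :=
  forall y x z, S y x -> leX par z x -> S y z.
Definition F4 {X Y : Type} (par : X -> Y -> Prop) (S : Y -> X -> Prop) : Prop :=
  (forall x, stableX par (fun z => Sprime par S z x)) /\
  (forall z, stableX par (fun x => Sprime par S z x)).

Definition is_frame {X Y : Type} (par : X -> Y -> Prop) (S : Y -> X -> Prop) : Prop :=
  F0 par /\ F1 par /\ F2 par S /\ F3 par S /\ F4 par S.

Definition perp {X Y : Type} (par : X -> Y -> Prop) (S : Y -> X -> Prop) (x z : X) : Prop :=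
  Sprime par S x z.
Definition star {X Y : Type} (par : X -> Y -> Prop) (S : Y -> X -> Prop) (A : X -> Prop)
  : X -> Prop := fun x => forall z, A z -> perp par S x z.

Definition bigjoin {X Y : Type} (par : X -> Y -> Prop) {J : Type} (A : J -> X -> Prop)
  : X -> Prop := primeY par (primeX par (fun x => exists j, A j x)).
Definition join2 {X Y : Type} (par : X -> Y -> Prop) (A C : X -> Prop) : X -> Prop :=
  primeY par (primeX par (fun x => A x \/ C x)).
Definition bigcap {X : Type} {J : Type} (A : J -> X -> Prop) : X -> Prop :=
  fun x => forall j, A j x.

(* Main.v *)
Require Import Defs.

Section L.
Context {X Y : Type} (par : X -> Y -> Prop).

Lemma ext (U : X -> Prop) : subset U (primeY par (primeX par U)).
Proof. intros x Hx y Hy; apply Hy, Hx. Qed.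

Lemma cl_least (U B : X -> Prop) : stableX par B -> subset U B ->
  subset (primeY par (primeX par U)) B.
Proof.
  intros HB HU x Hx. apply HB. intros y Hy. apply Hx. intros z Hz. apply Hy, HU, Hz.
Qed.

Lemma cl_stable (U : X -> Prop) : stableX par (primeY par (primeX par U)).
Proof.
  intros x; split; [intro Hq; apply ext; exact Hq|].
  intros Hx y Hy. apply Hx. intros z Hz. apply Hz, Hy.
Qed.

Lemma cap_stable (J : Type) (A : J -> X -> Prop) : (forall j, stableX par (A j)) ->
  stableX par (fun x => forall j, A j x).
Proof.
  intros HA x; split; [intro Hq; apply ext; exact Hq|].
  intros Hx j. apply (cl_least (fun x => forall j, A j x) (A j) (HA j)); auto.
  intros t Ht; apply Ht.
Qed.
End L.

Theorem corollary3p13 (X Y : Type) (par : X -> Y -> Prop) (S : Y -> X -> Prop)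
  (Hframe : is_frame par S) :
  (* main claim: (\/_j A_j)^* = /\_j A_j^* for every family of stable sets *)
  (forall (J : Type) (A : J -> X -> Prop),
      (forall j, stableX par (A j)) ->
      set_eq (star par S (bigjoin par A)) (bigcap (fun j => star par S (A j)))) /\
  (* G(X) is a complete lattice: meets are intersections, joins are (union)'',
     bottom is the empty set, top is X *)
  (forall (J : Type) (A : J -> X -> Prop),
      (forall j, stableX par (A j)) ->
      stableX par (bigcap A) /\ stableX par (bigjoin par A) /\
      (forall j, subset (A j) (bigjoin par A)) /\
      (forall C, stableX par C -> (forall j, subset (A j) C) -> subset (bigjoin par A) C)) /\
  stableX par (fun _ : X => False) /\ stableX par (fun _ : X => True) /\
  (* (.)^* is a minimal quasi-complementation on G(X) *)
  (forall A, stableX par A -> stableX par (star par S A)) /\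
  (forall A C, stableX par A -> stableX par C -> subset A C ->
      subset (star par S C) (star par S A)) /\
  set_eq (star par S (fun _ : X => False)) (fun _ : X => True) /\
  (forall A C, stableX par A -> stableX par C ->
      set_eq (star par S (join2 par A C))
             (fun x => star par S A x /\ star par S C x)).
Proof.
  destruct Hframe as [[F0a F0b] [_ [_ [_ [F4a F4b]]]]].
  split; [|split; [|split; [|split; [|split; [|split; [|split]]]]]].
  - intros J A _ x; split.
    + intros Hx j z Hz. apply Hx. apply ext. exists j; exact Hz.
    + intros Hx z Hz.
      apply (cl_least par (fun x0 => exists j, A j x0) (fun z => Sprime par S x z) (F4b x)); auto.
      intros t [j Ht]. apply (Hx j t Ht).
  - intros J A HA; split; [|split; [|split]].
    + apply cap_stable; auto.
    + apply cl_stable.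
    + intros j t Ht. apply ext. exists j; exact Ht.
    + intros C HC HAC. apply cl_least; auto. intros t [j Ht]. apply (HAC j t Ht).
  - intros x; split; [tauto|]. intros Hx. destruct (F0a x) as [y Hy].
    exfalso; apply Hy, Hx. intros z [].
  - intros x; split; [|tauto]. intros _ y Hy. destruct (F0b y) as [z Hz].
    exfalso; apply Hz, Hy; exact I.
  - intros A _ x; split; [intro Hq; apply ext; exact Hq|].
    intros Hx z Hz.
    apply (cl_least par (star par S A) (fun x0 => Sprime par S x0 z) (F4a z)); auto.
    intros t Ht; apply Ht, Hz.
  - intros A C _ _ HAC x Hx z Hz. apply Hx, HAC, Hz.
  - intros x; split; [tauto|]. intros _ z [].
  - intros A C _ _ x; split.
    + intros Hx; split; intros z Hz; apply Hx, ext; auto.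
    + intros [HA HC] z Hz.
      apply (cl_least par (fun x0 => A x0 \/ C x0) (fun z => Sprime par S x z) (F4b x)); auto.
      intros t [Ht|Ht]; [apply HA|apply HC]; exact Ht.
Qed.
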